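(* If $\mathcal{F}=\{f_i\}_{i=1}^k$ is a frame for $\mathcal{H}_n$, then there exists $y\in\mathcal{H}_n$ such that $\operatorname{rob}(\mathcal{F})=\operatorname{rob}(\{\langle f_i,y\rangle\}_{i=1}^k)$, where the sequence of scalars $\{\langle f_i,y\rangle\}_{i=1}^k$ is regarded as a frame for the one-dimensional space of scalars (so its maximum robustness equals one less than the number of nonzero entries).
   Context: $\mathcal{H}_n$ is an $n$-dimensional real or complex Hilbert space. A finite sequence of vectors in a finite-dimensional Hilbert space is a frame for it iff it spans it. A frame $\{f_i\}_{i=1}^k$ is robust to $r$ erasures if for every index set $I\subseteq\{1,\dots,k\}$ with $|I|=r$, the sequence $\{f_i\}_{i\notin I}$ still spans the space. The maximum robustness $\operatorname{rob}(\mathcal{F})$ is the largest $r$ such that $\mathcal{F}$ is robust to $r$ erasures. *)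

(* Defs.v *)
From HB Require Import structures.
From mathcomp Require Import all_boot all_order all_algebra.
Set Implicit Arguments. Unset Strict Implicit. Unset Printing Implicit Defensive.
Import Order.TTheory GRing.Theory Num.Theory.
Local Open Scope ring_scope.

(* A finite sequence {f_i}_{i<k} of vectors of K^n is stored as the k x n
   matrix F whose i-th row is f_i. *)

Definition spans (K : fieldType) (k n : nat) (F : 'M[K]_(k, n)) (S : {set 'I_k}) : bool :=
  (1%:M <= \sum_(i in S) <<row i F>>)%MS.

Definition is_frame (K : fieldType) (k n : nat) (F : 'M[K]_(k, n)) : bool :=
  spans F setT.

Definition robust (K : fieldType) (k n : nat) (F : 'M[K]_(k, n)) (r : nat) : bool :=
  [forall I : {set 'I_k}, (#|I| == r) ==> spans F (~: I)].

(* maximum robustness: the largest r (0 <= r <= k) such that F is robust to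
   r erasures (only meaningful for frames, which are robust to 0 erasures) *)
Definition rob (K : fieldType) (k n : nat) (F : 'M[K]_(k, n)) : nat :=
  \max_(r < k.+1 | robust F r) r.

Definition ipR (R : realFieldType) (n : nat) (u v : 'rV[R]_n) : R :=
  \sum_(j < n) u 0 j * v 0 j.
Definition ipC (C : numClosedFieldType) (n : nat) (u v : 'rV[C]_n) : C :=
  \sum_(j < n) u 0 j * (v 0 j)^*.

(* the sequence of scalars {<f_i, y>}_i, as a k x 1 matrix (a sequence in the
   one-dimensional space of scalars) *)
Definition coeffsR (R : realFieldType) (k n : nat) (F : 'M[R]_(k, n)) (y : 'rV[R]_n)
  : 'M[R]_(k, 1) := \matrix_(i < k, j < 1) ipR (row i F) y.
Definition coeffsC (C : numClosedFieldType) (k n : nat) (F : 'M[C]_(k, n)) (y : 'rV[C]_n)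
  : 'M[C]_(k, 1) := \matrix_(i < k, j < 1) ipC (row i F) y.

(* Main.v *)
Require Import Defs.
From HB Require Import structures.
From mathcomp Require Import all_boot all_order all_algebra zify.
Set Implicit Arguments. Unset Strict Implicit. Unset Printing Implicit Defensive.
Import Order.TTheory GRing.Theory Num.Theory.
Local Open Scope ring_scope.

Lemma subset_of_size (T : finType) (A : {set T}) (t : nat) :
  (t <= #|A|)%N -> exists S : {set T}, S \subset A /\ #|S| = t.
Proof.
elim: t => [|t IH] Ht; first by exists set0; rewrite sub0set cards0.
have [S [SA cS]] := IH (ltnW Ht).
have : (0 < #|A :\: S|)%N by rewrite cardsD (setIidPr SA) cS subn_gt0.
case/card_gt0P => x; rewrite inE => /andP[xS xA].
exists (x |: S); rewrite subUset sub1set xA SA cardsU1 xS cS; split=> //.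
Qed.

Lemma spans_mono (K : fieldType) k n (F : 'M[K]_(k, n)) (S T : {set 'I_k}) :
  S \subset T -> spans F S -> spans F T.
Proof.
move=> ST; rewrite /spans => H; apply: submx_trans H _.
apply/sumsmx_subP => i iS; apply: (sumsmx_sup i) => //.
exact: (subsetP ST).
Qed.

Lemma rob_char (K : fieldType) k n (F : 'M[K]_(k, n)) (J : {set 'I_k}) :
  ~~ spans F J -> (forall S, ~~ spans F S -> (#|S| <= #|J|)%N) ->
  rob F = (k - #|J|).-1.
Proof.
move=> nJ maxJ; rewrite /rob; apply/eqP; rewrite eqn_leq; apply/andP; split.
  apply/bigmax_leqP => r /forallP rob_r.
  rewrite leqNgt; apply/negP => lt_r.
  have Hr : (k - r <= #|J|)%N.
    have := ltn_ord r; move: lt_r; lia.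
  have [S [SJ cS]] := subset_of_size Hr.
  have := rob_r (~: S); rewrite cardsCs setCK card_ord cS.
  have -> : (k - (k - r) = r)%N by have := ltn_ord r; lia.
  rewrite eqxx /= => spS; case/negP: nJ; exact: spans_mono SJ spS.
have [JT|JT] := eqVneq J setT.
  by rewrite JT cardsT card_ord subnn.
have cJ : (#|J| < k)%N.
  have := proper_card (eqbRL (properT J) JT); rewrite cardsT card_ord //.
have lt : ((k - #|J|).-1 < k.+1)%N by lia.
apply: (@leq_bigmax_cond _ _ _ (Ordinal lt)) => /=.
apply/forallP => I; apply/implyP => /eqP cI.
apply/negPn/negP => nI; have := maxJ _ nI.
rewrite cardsCs setCK card_ord cI; apply: (_ : forall a, (a < k)%N -> (k - (k-a).-1 <= a)%N -> False) cJ; by move=> a; rewrite -subn1; lia.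
Qed.
Lemma spans_col (K : fieldType) k (c : 'M[K]_(k, 1)) (S : {set 'I_k}) :
  spans c S = [exists i in S, c i 0 != 0].
Proof.
rewrite /spans; apply/idP/idP.
  move=> H; apply: contraLR H; rewrite negb_exists_in => /forallP Hn.
  rewrite big1 ?submx0.
    by apply/negP => /eqP/matrixP/(_ 0 0); rewrite !mxE /= => /eqP; rewrite oner_eq0.
  move=> i iS.
  have := Hn i; rewrite iS /= negbK => /eqP ci0.
  have -> : row i c = 0 by apply/rowP => j; rewrite ord1 mxE ci0 mxE.
  exact: genmx0.
case/existsP=> i /andP[iS ci].
apply: submx_trans (sumsmx_sup i _ (submx_refl _)) => //.
rewrite genmxE sub1mx /row_full eqn_leq rank_leq_col lt0n mxrank_eq0 /=.
apply/eqP => /matrixP /(_ 0 0); rewrite !mxE => /eqP; exact/negP.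
Qed.
Lemma main_gen (K : fieldType) k n (F : 'M[K]_(k,n)) (c : 'M[K]_(k,1))
  (v : 'cV[K]_n) (J : {set 'I_k}) :
  ~~ spans F J -> (forall S, ~~ spans F S -> (#|S| <= #|J|)%N) -> is_frame F ->
  v != 0 -> (forall i, i \in J -> row i F *m v = 0) ->
  (forall i, c i 0 = (row i F *m v) 0 0) ->
  is_frame c /\ rob F = rob c.
Proof.
move=> nJ maxJ frF v0 vJ cE.
have key : forall i, (c i 0 == 0) = (i \in J).
  move=> i; apply/idP/idP; last by move=> iJ; rewrite cE vJ // mxE.
  move=> /eqP ci0; apply/negPn/negP => iJ.
  have rv : row i F *m v = 0.
    by apply/matrixP => a b; rewrite !ord1 -cE ci0 mxE.
  have spi : spans F (i |: J).
    apply/negPn/negP => /maxJ; rewrite cardsU1 iJ; lia.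
  have : (1%:M <= kermx v)%MS.
    apply: submx_trans spi _; apply/sumsmx_subP => j; rewrite in_setU1.
    case/orP => [/eqP -> | jJ]; rewrite genmxE sub_kermx.
      by rewrite rv.
    by rewrite vJ.
  by rewrite sub_kermx mul1mx (negPf v0).
have cJ : ~~ spans c J.
  rewrite spans_col negb_exists_in; apply/forallP => i; apply/implyP => iJ.
  by rewrite negbK key.
have maxc : forall S, ~~ spans c S -> (#|S| <= #|J|)%N.
  move=> S; rewrite spans_col negb_exists_in => /forallP H.
  apply: subset_leq_card; apply/subsetP => i iS.
  by have := H i; rewrite iS /= negbK key.
split; last by rewrite (rob_char nJ maxJ) (rob_char cJ maxc).
rewrite /is_frame spans_col.
have JT : J != setT by apply: contraNneq nJ => ->; exact: frF.
have [i iJ] : exists i, i \notin J.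
  apply/existsP; move: JT; apply: contraR; rewrite negb_exists => /forallP H.
  apply/eqP/setP => i; by have := H i; rewrite negbK inE => ->.
by apply/existsP; exists i; rewrite inE key.
Qed.
Lemma exJ (K : fieldType) k n (F : 'M[K]_(k,n)) : (0 < n)%N ->
  exists J, ~~ spans F J /\ forall S, ~~ spans F S -> (#|S| <= #|J|)%N.
Proof.
move=> n0.
have H0 : ~~ spans F set0.
  rewrite /spans big_set0 submx0; apply/negP => /eqP/matrixP/(_ (Ordinal n0) (Ordinal n0)).
  by rewrite !mxE eqxx /= => /eqP; rewrite oner_eq0.
case: (@arg_maxnP _ set0 (fun S => ~~ spans F S) (fun S => #|S|) H0) => J nJ maxJ.
by exists J; split.
Qed.

Lemma exv (K : fieldType) k n (F : 'M[K]_(k,n)) J : ~~ spans F J ->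
  exists v : 'cV[K]_n, v != 0 /\ forall i, i \in J -> row i F *m v = 0.
Proof.
move=> nJ; set A := (\sum_(i in J) <<row i F>>)%MS.
have rA : (\rank A < n)%N.
  move: nJ; rewrite /spans -/A sub1mx /row_full ltn_neqAle rank_leq_col andbT //.
have cA : cokermx A != 0.
  by rewrite -mxrank_eq0 mxrank_coker; lia.
have [j cj] : exists j, col j (cokermx A) != 0.
  apply/existsP; move: cA; apply: contraR; rewrite negb_exists => /forallP H.
  apply/eqP/matrixP => a b; have := H b; rewrite negbK => /eqP/matrixP/(_ a 0).
  by rewrite !mxE.
exists (col j (cokermx A)); split => // i iJ.
have : (row i F <= A)%MS by apply: (sumsmx_sup i) => //; rewrite genmxE.
case/submxP => X ->; by rewrite colE mulmxA -(mulmxA X) mulmx_coker mulmx0 mul0mx.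
Qed.

Theorem theorem2p3 :
  (forall (R : realFieldType) (n k : nat) (F : 'M[R]_(k, n)),
      (0 < n)%N -> is_frame F ->
      exists y : 'rV[R]_n, is_frame (coeffsR F y) /\ rob F = rob (coeffsR F y)) /\
  (forall (C : numClosedFieldType) (n k : nat) (F : 'M[C]_(k, n)),
      (0 < n)%N -> is_frame F ->
      exists y : 'rV[C]_n, is_frame (coeffsC F y) /\ rob F = rob (coeffsC F y)).
Proof.
split.
  move=> R n k F n0 frF.
  have [J [nJ maxJ]] := exJ F n0.
  have [v [v0 vJ]] := exv nJ.
  exists v^T; apply: (main_gen nJ maxJ frF v0 vJ) => i.
  rewrite !mxE /ipR; apply: eq_bigr => j _; by rewrite !mxE.
move=> C n k F n0 frF.
have [J [nJ maxJ]] := exJ F n0.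
have [v [v0 vJ]] := exv nJ.
exists (map_mx Num.conj_op v)^T; apply: (main_gen nJ maxJ frF v0 vJ) => i.
rewrite !mxE /ipC; apply: eq_bigr => j _; by rewrite !mxE conjCK.
Qed.
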